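(* Let $m\ge 1$, let $\ell_1,\dots,\ell_m$ be positive integers, let $p\in[m]$, put $n=\ell_1+\cdots+\ell_m$, and define $\ell'=(\ell'_1,\dots,\ell'_m)$ by $\ell'_i=\ell_i+1$ for $i\neq p$ and $\ell'_p=\ell_p$. Let $\alpha$ be a cyclic word (of length $n+m-1$) over $[m]$ in which each letter $i$ occurs exactly $\ell'_i$ times. Then $\alpha\in\textsf{L-NCN}(\ell')$ if and only if $\alpha=\overline{\omega}$ for some valid word $\omega\in[m]^{n+m-2}$.
   Context: A subword of a word means a not necessarily contiguous subsequence. Given $m$, $p\in[m]$ and positive integers $\ell_1,\dots,\ell_m$ with $n=\sum\ell_i$, a word $\omega\in[m]^{n+m-2}$ is called valid if: the letter $p$ occurs exactly $\ell_p-1$ times; each letter $j\in[m]\setminus\{p\}$ occurs exactly $\ell_j+1$ times; for $i\neq j$ there is no subword $ijij$; and for $i\neq p$ there is no subword $ipi$. A cyclic word is an equivalence class of words under cyclic rotation. For a valid word $\omega$, $\overline{\omega}$ denotes the cyclic word (rotation class) of the word $\omega p$ obtained by appending one letter $p$ at the end (i.e. inserting $p$ between the last and first letters cyclically). For a sequence $x=(x_1,\dots,x_t)$ of positive integers with $N=\sum x_i$, $\textsf{L-NC}(x)$ is the set of words $w=w_1\cdots w_N$ over $[t]$ in which each letter $i$ occurs exactly $x_i$ times and such that there are no indices $a<b<c<d$ and letters $i\neq j$ with $w_a=w_c=i$, $w_b=w_d=j$ (equivalently, the partition of $[N]$ into the sets $\{a: w_a=i\}$ is noncrossing, the block of size $x_i$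 being labeled $i$); these are the labeled noncrossing partitions of type $x$. This condition is invariant under cyclic rotation, and $\textsf{L-NCN}(x)$ denotes the set of rotation classes of elements of $\textsf{L-NC}(x)$ (labeled noncrossing necklaces of type $x$). *)

(* Defs.v *)
(* Words are sequences of natural numbers; the alphabet [m] is {1,...,m}. *)
From mathcomp Require Import ssreflect ssrfun ssrbool eqtype ssrnat seq choice fintype bigop.
Set Implicit Arguments. Unset Strict Implicit. Unset Printing Implicit Defensive.

Definition over_alphabet (m : nat) (w : seq nat) : Prop :=
  forall x, x \in w -> 1 <= x <= m.

Definition lsum (m : nat) (l : nat -> nat) : nat := \sum_(1 <= i < m.+1) l i.

Definition lprime (p : nat) (l : nat -> nat) (i : nat) : nat :=
  if i == p then l i else (l i).+1.

(* valid words (subword = not necessarily contiguous subsequence = subseq) *)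
Definition valid (m p : nat) (l : nat -> nat) (w : seq nat) : Prop :=
  [/\ size w = lsum m l + m - 2 /\ over_alphabet m w,
      count_mem p w = (l p).-1,
      (forall j, 1 <= j <= m -> j != p -> count_mem j w = (l j).+1),
      (forall i j, i != j -> ~~ subseq [:: i; j; i; j] w) &
      (forall i, i != p -> ~~ subseq [:: i; p; i] w)].

Definition noncrossing (w : seq nat) : Prop :=
  forall a b c d, a < b -> b < c -> c < d -> d < size w ->
    nth 0 w a = nth 0 w c -> nth 0 w b = nth 0 w d -> nth 0 w a = nth 0 w b.

Definition LNC (t : nat) (x : nat -> nat) (w : seq nat) : Prop :=
  [/\ size w = \sum_(1 <= i < t.+1) x i,
      over_alphabet t w,
      (forall i, 1 <= i <= t -> count_mem i w = x i) &
      noncrossing w].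

Definition cyc_eq (u v : seq nat) : Prop := exists k, rot k u = v.

(* a cyclic word (represented by any word alpha of its class) lies in L-NCN(x) *)
Definition in_LNCN (t : nat) (x : nat -> nat) (alpha : seq nat) : Prop :=
  exists beta, LNC t x beta /\ cyc_eq beta alpha.

(* alpha equals bar(omega) : the rotation class of omega p *)
Definition is_bar (p : nat) (omega alpha : seq nat) : Prop :=
  cyc_eq (rcons omega p) alpha.

(* Main.v *)
Require Import Defs.
From mathcomp Require Import ssreflect ssrfun ssrbool eqtype ssrnat seq choice fintype bigop.
From mathcomp Require Import path zify.
Set Implicit Arguments. Unset Strict Implicit. Unset Printing Implicit Defensive.

Definition ncs (w : seq nat) : Prop :=
  forall i j, i != j -> ~~ subseq [:: i; j; i; j] w.

Lemma ncs_rot1 w : ncs (rot 1 w) -> ncs w.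
Proof.
case: w => [|x s] H i j ij //; rewrite rot1_cons in H.
rewrite /= ; case: ifP => [/eqP ix|_].
  subst x; apply/negP => Hs; move: (H j i); rewrite eq_sym ij => /(_ isT) /negP; apply.
  by rewrite -!cats1 /= -[[:: j; i; j; i]]/([:: j; i; j] ++ [:: i]) subseq_cat2r.
apply/negP => Hs; move: (H i j ij) => /negP; apply.
exact: subseq_trans Hs (subseq_rcons _ _).
Qed.

Lemma ncs_rotinv k w : ncs (rot k w) -> ncs w.
Proof.
elim: k => [|k IH]; first by rewrite rot0.
case: (leqP (size w) k) => Hk.
  by rewrite rot_oversize ?rot_oversize //; apply: leqW.
move=> H; apply: IH; apply: ncs_rot1.
by by rewrite -rotD ?add1n.
Qed.

Lemma ncs_rot k w : ncs w -> ncs (rot k w).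
Proof.
move=> H; apply: (@ncs_rotinv (size (rot k w) - k)).
by rewrite -/(rotr k (rot k w)) rotK.
Qed.

Lemma ext_sub x t s : subseq (x :: t) s ->
  exists a, [/\ a < size s, nth 0 s a = x & subseq t (drop a.+1 s)].
Proof.
elim: s => [|y s IH] //=.
case: ifP => [/eqP ->|_] H; first by exists 0; rewrite drop0.
by case: (IH H) => a [H1 H2 H3]; exists a.+1.
Qed.

Lemma ins_sub a s t : a < size s -> subseq t (drop a.+1 s) -> subseq (nth 0 s a :: t) s.
Proof.
elim: s a => [|y s IH] [|a] //=; first by rewrite eqxx drop0.
move=> Ha H; apply: subseq_trans (IH a Ha H) (subseq_cons _ _).
Qed.

Lemma ext_sub_drop k x t s : subseq (x :: t) (drop k s) ->
  exists a, [/\ k <= a, a < size s, nth 0 s a = x & subseq t (drop a.+1 s)].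
Proof.
move/ext_sub => [a [H1 H2 H3]]; exists (k + a).
rewrite size_drop nth_drop drop_drop in H1 H2 H3 *.
split => //; first lia; first lia.
by move: H3; rewrite addSn addnC.
Qed.

Lemma ins_sub_drop k a s t : k <= a -> a < size s -> subseq t (drop a.+1 s) ->
  subseq (nth 0 s a :: t) (drop k s).
Proof.
move=> Hk Ha Ht.
have -> : nth 0 s a = nth 0 (drop k s) (a - k) by rewrite nth_drop subnKC.
apply: ins_sub; first by rewrite size_drop; lia.
by rewrite drop_drop; have -> : (a - k).+1 + k = a.+1 by lia.
Qed.

Lemma nc_ncs w : noncrossing w <-> ncs w.
Proof.
split.
  move=> H i j ij; apply/negP => Hs.
  have := ext_sub_drop (k:=0) (s:=w); rewrite drop0 => /(_ _ _ Hs).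
  case=> a [_ Ha Ea /ext_sub_drop [b [Hb Hb' Eb /ext_sub_drop [c [Hc Hc' Ec /ext_sub_drop [d [Hd Hd' Ed _]]]]]]].
  have := H a b c d; rewrite Ea Eb Ec Ed => /(_ Hb Hc Hd Hd' erefl erefl) /eqP.
  by rewrite (negbTE ij).
move=> H a b c d ab bc cd dw Eac Ebd; apply/eqP/negP => ne.
move: (H _ _ (introN idP ne)) => /negP; apply.
rewrite {2}Eac {2}Ebd; apply: (subseq_trans _ (drop_subseq w 0)).
have Ha : a < size w by clear -ab bc cd dw; lia.
have Hb : b < size w by clear -ab bc cd dw; lia.
have Hc : c < size w by clear -ab bc cd dw; lia.
apply: ins_sub_drop => //.
apply: ins_sub_drop => //.
apply: ins_sub_drop => //.
by apply: ins_sub_drop => //; apply: sub0seq.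
Qed.

Lemma sum_lprime m p l : 1 <= p <= m ->
  \sum_(1 <= i < m.+1) lprime p l i = lsum m l + (m - 1).
Proof.
move=> Hp; rewrite /lsum.
have -> : \sum_(1 <= i < m.+1) lprime p l i =
  \sum_(1 <= i < m.+1) (l i + (i != p)).
  by apply: eq_bigr => i _; rewrite /lprime; case: eqP => _ /=; rewrite ?addn0 ?addn1.
rewrite big_split /=; congr (_ + _).
rewrite /index_iota subSS subn0.
have -> : \sum_(i <- iota 1 m) (i != p : nat) = count (predC1 p) (iota 1 m).
  elim: (iota 1 m) => [|x s IH]; first by rewrite big_nil.
  by rewrite big_cons IH.
have E := count_predC (pred1 p) (iota 1 m).
rewrite size_iota count_uniq_mem ?iota_uniq // mem_iota in E.
have E2 : (1 <= p < 1 + m) by clear -Hp; lia.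
rewrite E2 in E.
have -> : count (predC1 p) (iota 1 m) = count (predC (pred1 p)) (iota 1 m) by apply: eq_count.
move: E; clear; lia.
Qed.

Theorem mainTheorem1 (m p : nat) (l : nat -> nat) (alpha : seq nat) :
  1 <= m ->
  (forall i, 1 <= i <= m -> 0 < l i) ->
  1 <= p <= m ->
  size alpha = lsum m l + m - 1 ->
  over_alphabet m alpha ->
  (forall i, 1 <= i <= m -> count_mem i alpha = lprime p l i) ->
  (in_LNCN m (lprime p l) alpha <->
   exists omega, valid m p l omega /\ is_bar p omega alpha).
Proof.
move=> Hm Hl Hp Hsz Hov Hcnt; split.
- case=> beta [[_ _ _ Hnc] [k Ek]].
  have Hn : ncs alpha by rewrite -Ek; apply: ncs_rot; apply/nc_ncs.
  have Hpin : p \in alpha.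
    rewrite -has_pred1 has_count Hcnt // /lprime eqxx; exact: Hl.
  case/splitPr: Hpin Hsz Hov Hcnt Hn => s1 s2 Hsz Hov Hcnt Hn.
  have Erot : rcons (s2 ++ s1) p = rot (size (rcons s1 p)) (s1 ++ p :: s2).
    by rewrite -cat_rcons rot_size_cat rcons_cat.
  have Hn' : ncs (rcons (s2 ++ s1) p) by rewrite Erot; apply: ncs_rot.
  exists (s2 ++ s1); split; last first.
    by exists (size s2); rewrite rcons_cat rot_size_cat cat_rcons.
  split.
  + split; first by move: Hsz; rewrite !size_cat /=; lia.
    by move=> x Hx; apply: Hov; move: Hx; rewrite !mem_cat inE => /orP [] ->; rewrite ?orbT.
  + move: (Hcnt p Hp); rewrite /lprime eqxx !count_cat /= eqxx; lia.
  + move=> j Hj jp; move: (Hcnt j Hj); rewrite /lprime (negbTE jp) !count_cat /=.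
    by rewrite eq_sym (negbTE jp); lia.
  + move=> i j ij; apply/negP => Hs; move: (Hn' i j ij) => /negP; apply.
    exact: subseq_trans Hs (subseq_rcons _ _).
  + move=> i ip; apply/negP => Hs; move: (Hn' i p ip) => /negP; apply.
    by rewrite -cats1 -[[:: i; p; i; p]]/([:: i; p; i] ++ [:: p]) subseq_cat2r.
- case=> omega [[[_ _] _ _ Hij Hip] [k Ek]].
  exists (rcons omega p); split; last by exists k.
  split.
  + by rewrite sum_lprime // -(size_rot k) Ek Hsz; lia.
  + by move=> x Hx; apply: Hov; rewrite -Ek mem_rot.
  + by move=> i Hi; rewrite -Hcnt // -Ek; have /permP -> // : perm_eq (rot k (rcons omega p)) (rcons omega p) by rewrite perm_rot.
  + apply/nc_ncs => i j ij; apply/negP.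
    rewrite -cats1 -[[:: i; j; i; j]]/([:: i; j; i] ++ [:: j]).
    case: (eqVneq j p) => [Ej|jp]; first subst j.
      by rewrite subseq_cat2r; apply/negP; apply: Hip; rewrite ij.
    move=> Hs; move: (Hij i j ij) => /negP; apply.
    move: Hs; rewrite !cats1 -subseq_rev !rev_rcons /= (negbTE jp).
    by rewrite -rev_rcons subseq_rev.
Qed.
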